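(* Let $k\in\mathbb N$, $b\geqslant2$, let $\mathbb P$ be a probability measure on $\{0,1,\dots,b-1\}^k$, and let $\mu=\mu_{b,\mathbb P}$. For every $L\in\mathbb N$, \[ \dim_{\ell^1}(\mu)\geqslant\frac{-\log\Big(\displaystyle\sup_{\mathbf x\in\mathbb R^k}b^{-kL}\sum_{i_1,\dots,i_k=0}^{b^L-1}S_L\Big(\mathbf x+\frac{\mathbf i}{b^L}\Big)\Big)}{\log(b^L)}, \] where $\mathbf i=(i_1,\dots,i_k)$.
   Context: The missing-digit measure $\mu_{b,\mathbb P}$ is the distribution of the random variable $\sum_{j=1}^\infty\mathbf d^{(j)}/b^j$, where the $\mathbf d^{(j)}\in\{0,\dots,b-1\}^k$ are i.i.d. with distribution $\mathbb P$. For $\mathbf x\in\mathbb R^k$ define \[ g(\mathbf x)=\Big|\sum_{\mathbf d\in\{0,\dots,b-1\}^k}\mathbb P(\mathbf d)\,e^{2\pi i\,\mathbf d\cdot\mathbf x}\Big|,\qquad S_L(\mathbf x)=\prod_{j=0}^{L-1}g(b^j\mathbf x). \] For a Borel probability measure $\nu$ on $[0,1]^k$, $\hat\nu({\boldsymbol{\xi}})=\int e^{-2\pi i{\boldsymbol{\xi}}\cdot\mathbf x}\,d\nu(\mathbf x)$ and $\dim_{\ell^1}(\nu)=\sup\{s\geqslant0:\sum_{{\boldsymbol{\xi}}\in\mathbb Z^k,\|{\boldsymbol{\xi}}\|_\infty\leqslant Q}|\hat\nu({\boldsymbol{\xi}})|\ll Q^{k-s}\ (Q\geqslant1)\}$.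 *)

(* Defs.v *)
From HB Require Import structures.
From mathcomp Require Import all_boot all_order all_algebra.
From mathcomp Require Import all_classical all_reals all_analysis.
Set Implicit Arguments. Unset Strict Implicit. Unset Printing Implicit Defensive.
Import Order.TTheory GRing.Theory Num.Theory numFieldNormedType.Exports.
Local Open Scope classical_set_scope.
Local Open Scope ring_scope.

Section MissingDigit.
Variable R : realType.

Definition digit (k b : nat) := {ffun 'I_k -> 'I_b}.

Definition is_prob (k b : nat) (P : digit k b -> R) : Prop :=
  (forall d, 0 <= P d) /\ \sum_(d : digit k b) P d = 1.

Definition ddot (k b : nat) (d : digit k b) (x : 'I_k -> R) : R :=
  \sum_(i < k) ((d i : nat)%:R * x i).

Definition cmod (re im : R) : R := Num.sqrt (re ^+ 2 + im ^+ 2).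

(* g(x) = | sum_d P(d) e^{2 pi i d.x} | *)
Definition gfun (k b : nat) (P : digit k b -> R) (x : 'I_k -> R) : R :=
  cmod (\sum_(d : digit k b) P d * cos (2 * pi * ddot d x))
       (\sum_(d : digit k b) P d * sin (2 * pi * ddot d x)).

Definition S_L (k b : nat) (P : digit k b -> R) (L : nat) (x : 'I_k -> R) : R :=
  \prod_(j < L) gfun P (fun i => (b ^ j)%:R * x i).

(* Phase  xi . X_n  where X_n = sum_{j=1}^n d^(j) / b^j, for a digit word
   w = (d^(1),...,d^(n)) (w j is d^(j+1)). *)
Definition phase_n (k b n : nat) (xi : 'I_k -> int) (w : {ffun 'I_n -> digit k b}) : R :=
  \sum_(j < n) \sum_(i < k) (xi i)%:~R * ((w j i : nat)%:R / (b ^ j.+1)%:R).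

Definition wprob (k b n : nat) (P : digit k b -> R) (w : {ffun 'I_n -> digit k b}) : R :=
  \prod_(j < n) P (w j).

(* Fourier coefficient of the law mu_n of X_n = sum_{j=1}^n d^(j)/b^j:
   hat mu_n(xi) = E[e^{-2 pi i xi . X_n}]  (real and imaginary parts). *)
Definition muhat_re_n (k b : nat) (P : digit k b -> R) (xi : 'I_k -> int) (n : nat) : R :=
  \sum_(w : {ffun 'I_n -> digit k b}) wprob P w * cos (- (2 * pi * phase_n xi w)).
Definition muhat_im_n (k b : nat) (P : digit k b -> R) (xi : 'I_k -> int) (n : nat) : R :=
  \sum_(w : {ffun 'I_n -> digit k b}) wprob P w * sin (- (2 * pi * phase_n xi w)).

(* mu_{b,P} is the law of X = sum_{j>=1} d^(j)/b^j = lim X_n (a.s., hence in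
   law), so hat mu(xi) = lim_n hat mu_n(xi). *)
Definition muhat_abs (k b : nat) (P : digit k b -> R) (xi : 'I_k -> int) : R :=
  cmod (limn (muhat_re_n P xi)) (limn (muhat_im_n P xi)).

(* sum over xi in Z^k with ||xi||_oo <= N of |hat mu(xi)| ;
   xi_i = j_i - N with j_i in {0,...,2N}. *)
Definition box_sum (k b : nat) (P : digit k b -> R) (N : nat) : R :=
  \sum_(j : {ffun 'I_k -> 'I_(N.*2.+1)})
     muhat_abs P (fun i => (j i : nat)%:Z - N%:Z).

Definition dim_l1 (k b : nat) (P : digit k b -> R) : \bar R :=
  ereal_sup [set (s%:E)%E | s in
    [set s : R | 0 <= s /\
       exists C : R, forall Q : R, 1 <= Q ->
         box_sum P (Num.truncn Q) <= C * Q `^ (k%:R - s)]].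

Definition sup_avg (k b : nat) (P : digit k b -> R) (L : nat) : R :=
  sup [set (((b ^ (k * L))%:R)^-1 *
          \sum_(i : {ffun 'I_k -> 'I_(b ^ L)})
             S_L P L (fun m => x m + (i m : nat)%:R / (b ^ L)%:R)) | x in
       [set: 'I_k -> R]].

End MissingDigit.

(* Main.v *)
Require Import Defs.
From HB Require Import structures.
From mathcomp Require Import all_boot all_order all_algebra.
From mathcomp Require Import all_classical all_reals all_analysis.
From mathcomp Require Import complex.
From mathcomp Require Import ring lra zify.
Import Order.TTheory GRing.Theory Num.Theory numFieldNormedType.Exports.
Import ComplexField.Normc.
Set Implicit Arguments. Unset Strict Implicit. Unset Printing Implicit Defensive.
Local Open Scope classical_set_scope.
Local Open Scope ring_scope.
Section P1.
Variable R : realType.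

Definition ee (t : R) : R[i] := Complex (cos t) (sin t).

Lemma eeD a b : ee (a + b) = ee a * ee b.
Proof. by rewrite /ee cosD sinD; simpc; congr Complex; rewrite addrC. Qed.

Lemma ee0 : ee 0 = 1.
Proof. by rewrite /ee cos0 sin0; apply/eqP; simpc. Qed.

Lemma ee_sum (I : Type) (r : seq I) (Pr : pred I) (f : I -> R) :
  ee (\sum_(i <- r | Pr i) f i) = \prod_(i <- r | Pr i) ee (f i).
Proof. by apply: (big_morph ee eeD ee0). Qed.

Lemma normc_ee t : normc (ee t) = 1.
Proof. by rewrite /ee /= cos2Dsin2 sqrtr1. Qed.

Lemma normc_le (a b : R) : normc (Complex a b) <= `|a| + `|b|.
Proof.
rewrite /= -[X in _ <= X]ger0_norm ?addr_ge0 // -sqrtr_sqr.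
apply: ler_wsqrtr; rewrite sqrrD (real_normK (num_real a)) (real_normK (num_real b)).
by rewrite addrAC lerDl mulrn_wge0 // mulr_ge0.
Qed.

Lemma lip1 (f df : R -> R) :
  (forall x : R, is_derive x (1:R) f (df x)) -> (forall x, `|df x| <= 1) ->
  forall x y, `|f x - f y| <= `|x - y|.
Proof.
move=> hd hb.
have key : forall x y, x <= y -> `|f y - f x| <= `|y - x|.
  move=> x y xy.
  have cf : {within `[x, y], continuous f}.
    apply: continuous_subspaceT => z.
    apply/differentiable_continuous/derivable1_diffP; apply: ex_derive; exact: hd.
  have [c _ ->] := MVT_segment xy (fun z _ => hd z) cf.
  by rewrite normrM ler_piMl.
move=> x y; have [xy|xy] := leP x y.
  by have := key x y xy; rewrite distrC (distrC y x).
by rewrite key // ltW.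
Qed.

Lemma sin_lip (x : R) : `|sin x| <= `|x|.
Proof.
have := @lip1 (@sin R) (@cos R) (fun z => is_derive_sin z) (@cos_max R) x 0.
by rewrite sin0 !subr0.
Qed.

Lemma cos_lip (x : R) : `|cos x - 1| <= `|x|.
Proof.
have := @lip1 (@cos R) (fun z => - sin z) (fun z => is_derive_cos z) (fun z => _) x 0.
by rewrite cos0 !subr0; apply => z; rewrite normrN sin_max.
Qed.

Lemma normc_ee1 (t : R) : normc (ee t - 1) <= 2 * `|t|.
Proof.
have -> : ee t - 1 = Complex (cos t - 1) (sin t) by rewrite /ee /=; congr Complex; rewrite ?oppr0 ?addr0.
apply: (le_trans (normc_le _ _)).
by rewrite mulr2n mulrDl mul1r lerD ?cos_lip ?sin_lip.
Qed.

End P1.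
Section P2.
Variable R : realType.

Lemma cvg_of_bv (u : nat -> R) (B : R) :
  (forall n, \sum_(j < n) `|u j.+1 - u j| <= B) -> cvgn u.
Proof.
move=> hB.
pose w n := \sum_(j < n) `|u j.+1 - u j|.
pose v n := u n + w n.
have -> : u = v - w by apply/funext => n; rewrite /v /= addrK.
have wS n : w n.+1 = w n + `|u n.+1 - u n| by rewrite /w big_ord_recr.
have tel n : u n = u 0%N + \sum_(j < n) (u j.+1 - u j).
  by rewrite -(big_mkord xpredT (fun j => u j.+1 - u j)) telescope_sumr // addrC subrK.
apply: is_cvgB.
  apply: nondecreasing_is_cvgn.
    apply/nondecreasing_seqP => n; rewrite /v wS.
    have h : u n - u n.+1 <= `|u n.+1 - u n| by rewrite distrC ler_norm.
    lra.
  exists (u 0%N + B + B) => _ [n _ <-]; rewrite /v.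
  apply: lerD; last exact: hB.
  rewrite tel lerD2l; apply: (le_trans _ (hB n)).
  apply: (le_trans (ler_norm _)); apply: (le_trans (ler_norm_sum _ _ _)).
  by [].
apply: nondecreasing_is_cvgn.
  by apply/nondecreasing_seqP => n; rewrite wS lerDl.
by exists B => _ [n _ <-]; exact: hB.
Qed.

End P2.
Section P3.
Local Open Scope complex_scope.
Variable R : realType.
Variables (k b : nat) (P : digit k b -> R).
Hypothesis hP : is_prob P.
Hypothesis hb : (2 <= b)%N.

Definition theta (xi : 'I_k -> int) (j : nat) (d : digit k b) : R :=
  - (2 * pi * \sum_(i < k) (xi i)%:~R * ((d i : nat)%:R / (b ^ j.+1)%:R)).

Definition phic (xi : 'I_k -> int) (j : nat) : R[i] :=
  \sum_(d : digit k b) (P d)%:C * ee (theta xi j d).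

Definition muc (xi : 'I_k -> int) (n : nat) : R[i] :=
  \sum_(w : {ffun 'I_n -> digit k b}) (wprob P w)%:C * ee (- (2 * pi * phase_n R xi w)).

Lemma ReD (x y : R[i]) : complex.Re (x + y) = complex.Re x + complex.Re y.
Proof. by case: x; case: y. Qed.
Lemma ImD (x y : R[i]) : complex.Im (x + y) = complex.Im x + complex.Im y.
Proof. by case: x; case: y. Qed.

Lemma sum_complex (I : Type) (r : seq I) (Pr : pred I) (F G : I -> R) :
  \sum_(i <- r | Pr i) Complex (F i) (G i) =
  Complex (\sum_(i <- r | Pr i) F i) (\sum_(i <- r | Pr i) G i).
Proof.
elim: r => [|x r IH]; first by rewrite !big_nil.
rewrite !big_cons; case: (Pr x) => //; rewrite IH.
by [].
Qed.

Lemma rC_ee (r t : R) : r%:C * ee t = Complex (r * cos t) (r * sin t).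
Proof. by rewrite /ee; simpc. Qed.

Lemma muc_Complex xi n : muc xi n = Complex (muhat_re_n P xi n) (muhat_im_n P xi n).
Proof.
rewrite /muc /muhat_re_n /muhat_im_n -sum_complex.
by apply: eq_bigr => w _; rewrite rC_ee.
Qed.

Lemma muc_prod xi n : muc xi n = \prod_(j < n) phic xi j.
Proof.
rewrite /phic bigA_distr_bigA /muc; apply: eq_bigr => w _.
rewrite big_split /= -rmorph_prod -ee_sum /wprob; congr (_ * ee _).
rewrite /phase_n /theta mulr_sumr -sumrN; by [].
Qed.


Lemma normc_rC (r : R) : normc (r%:C) = `|r|.
Proof. by rewrite /= expr0n /= addr0 sqrtr_sqr. Qed.

Lemma normc_sum (I : Type) (r : seq I) (Pr : pred I) (F : I -> R[i]) :
  normc (\sum_(i <- r | Pr i) F i) <= \sum_(i <- r | Pr i) normc (F i).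
Proof.
elim: r => [|x r IH]; first by rewrite !big_nil normc0.
rewrite !big_cons; case: (Pr x) => //.
by apply: (le_trans (le_normcD _ _)); rewrite lerD2l.
Qed.

Lemma normc_prod (I : Type) (r : seq I) (Pr : pred I) (F : I -> R[i]) :
  normc (\prod_(i <- r | Pr i) F i) = \prod_(i <- r | Pr i) normc (F i).
Proof. by apply: (big_morph _ (@normcM R) (@normc1 R)). Qed.

Lemma normc_ge0 (z : R[i]) : 0 <= normc z.
Proof. by case: z => a c; rewrite /= sqrtr_ge0. Qed.

Lemma Re_le (z : R[i]) : `|complex.Re z| <= normc z.
Proof.
case: z => a c /=; rewrite -sqrtr_sqr; apply: ler_wsqrtr.
by rewrite lerDl sqr_ge0.
Qed.

Lemma Im_le (z : R[i]) : `|complex.Im z| <= normc z.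
Proof.
case: z => a c /=; rewrite -sqrtr_sqr; apply: ler_wsqrtr.
by rewrite lerDr sqr_ge0.
Qed.

Lemma cmod_Complex (a c : R) : cmod a c = normc (Complex a c).
Proof. by []. Qed.

Lemma normc_phic xi j :
  normc (phic xi j) = gfun P (fun i => (xi i)%:~R / (b ^ j.+1)%:R).
Proof.
rewrite /phic (eq_bigr (fun d => Complex (P d * cos (theta xi j d)) (P d * sin (theta xi j d)))); last first.
  by move=> d _; rewrite rC_ee.
rewrite sum_complex /gfun cmod_Complex /=.
rewrite /theta.
have E : forall d : digit k b, \sum_(i < k) (xi i)%:~R * ((d i : nat)%:R / (b ^ j.+1)%:R) =
   ddot (R:=R) d (fun i => (xi i)%:~R / (b ^ j.+1)%:R).
  by move=> d; rewrite /ddot; apply: eq_bigr => i _; rewrite mulrCA.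
apply: congr1; congr (_ + _).
  by congr (_ ^+ 2); apply: eq_bigr => d _; rewrite cosN E.
rewrite -sqrrN -sumrN; congr (_ ^+ 2); apply: eq_bigr => d _.
by rewrite sinN mulrN opprK E.
Qed.

End P3.
Section P4.
Local Open Scope complex_scope.
Variable R : realType.
Variables (k b : nat) (P : digit k b -> R).
Hypothesis hP : is_prob P.
Hypothesis hb : (2 <= b)%N.

Lemma gfun_normc x :
  gfun P x = normc (\sum_(d : digit k b) (P d)%:C * ee (2 * pi * ddot d x)).
Proof.
rewrite (eq_bigr (fun d => Complex (P d * cos (2 * pi * ddot d x)) (P d * sin (2 * pi * ddot d x)))); last first.
  by move=> d _; rewrite rC_ee.
by rewrite sum_complex.
Qed.

Lemma sum_normc_rC_ee (f : digit k b -> R) :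
  \sum_(d : digit k b) normc ((P d)%:C * ee (f d)) = 1.
Proof.
rewrite -hP.2; apply: eq_bigr => d _.
by rewrite normcM normc_ee mulr1 normc_rC ger0_norm // hP.1.
Qed.

Lemma gfun_le1 x : gfun P x <= 1.
Proof.
rewrite gfun_normc; apply: le_trans (normc_sum _ _ _) _.
by rewrite sum_normc_rC_ee.
Qed.

Lemma gfun_ge0 x : 0 <= gfun P x.
Proof. by rewrite /gfun /cmod sqrtr_ge0. Qed.

Lemma normc_muc xi n : normc (muc P xi n) =
  \prod_(j < n) gfun P (fun i => (xi i)%:~R / (b ^ j.+1)%:R).
Proof.
rewrite muc_prod normc_prod; apply: eq_bigr => j _; exact: normc_phic.
Qed.

Lemma normc_muc_le1 xi n : normc (muc P xi n) <= 1.
Proof.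
rewrite normc_muc; apply: prodr_ile1 => j _; by rewrite ?gfun_ge0 ?gfun_le1.
Qed.

Lemma normc_muc_noninc xi m n : (m <= n)%N -> normc (muc P xi n) <= normc (muc P xi m).
Proof.
move=> mn; rewrite !normc_muc.
rewrite -(subnKC mn) big_split_ord /=.
rewrite ler_piMr //.
  by apply: prodr_ge0 => j _; rewrite gfun_ge0.
by apply: prodr_ile1 => j _; rewrite ?gfun_ge0 ?gfun_le1.
Qed.


Definition cst (xi : 'I_k -> int) : R := 4 * pi * b%:R * \sum_(i < k) `|(xi i)%:~R : R|.

Lemma cst_ge0 xi : 0 <= cst xi.
Proof.
rewrite /cst !mulr_ge0 ?pi_ge0 ?ler0n //.
by apply: sumr_ge0 => i _.
Qed.

Lemma Bpos j : 0 < (b ^ j)%:R :> R.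
Proof. by rewrite ltr0n expn_gt0 (leq_trans _ hb). Qed.

Lemma theta_le xi j (d : digit k b) : 2 * `|theta R xi j d| <= cst xi / (b ^ j.+1)%:R.
Proof.
rewrite /theta normrN normrM (ger0_norm (_ : 0 <= 2 * pi)); last by rewrite mulr_ge0 ?pi_ge0.
set B := (b ^ j.+1)%:R : R.
set T := \sum_(i < k) `|(xi i)%:~R : R|.
have hS : `|\sum_(i < k) (xi i)%:~R * ((d i : nat)%:R / B)| <= T * (b%:R / B).
  rewrite /T mulr_suml; apply: le_trans (ler_norm_sum _ _ _) _; apply: ler_sum => i _.
  rewrite normrM ler_wpM2l // ger0_norm ?divr_ge0 // ler_pM2r ?invr_gt0 ?Bpos //.
  by rewrite ler_nat ltnW.
have hpi := pi_ge0 R.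
have -> : cst xi / B = 4 * pi * (T * (b%:R / B)) by rewrite /cst -/T; ring.
have -> : 2 * (2 * pi * `|\sum_(i < k) (xi i)%:~R * ((d i : nat)%:R / B)|) =
  4 * pi * `|\sum_(i < k) (xi i)%:~R * ((d i : nat)%:R / B)| by ring.
by rewrite ler_wpM2l // mulr_ge0.
Qed.

Lemma phic_sub1 xi j : normc (phic P xi j - 1) <= cst xi / (b ^ j.+1)%:R.
Proof.
have one : (1 : R[i]) = \sum_(d : digit k b) (P d)%:C by rewrite -rmorph_sum hP.2.
rewrite /phic one -sumrB; apply: le_trans (normc_sum _ _ _) _.
have -> : cst xi / (b ^ j.+1)%:R = \sum_(d : digit k b) P d * (cst xi / (b ^ j.+1)%:R).
  by rewrite -mulr_suml hP.2 mul1r.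
apply: ler_sum => d _.
have -> : (P d)%:C * ee (theta R xi j d) - (P d)%:C = (P d)%:C * (ee (theta R xi j d) - 1).
  by rewrite mulrBr mulr1.
rewrite normcM normc_rC ger0_norm ?hP.1 //; apply: ler_wpM2l; first exact: hP.1.
exact: le_trans (normc_ee1 _) (theta_le _ _ _).
Qed.

Lemma muc_step xi n : normc (muc P xi n.+1 - muc P xi n) <= cst xi / (b ^ n.+1)%:R.
Proof.
have -> : muc P xi n.+1 - muc P xi n = muc P xi n * (phic P xi n - 1).
  by rewrite !muc_prod big_ord_recr /= mulrBr mulr1.
rewrite normcM; apply: le_trans (phic_sub1 xi n).
rewrite ler_piMl ?normc_ge0 ?normc_muc_le1 //.
Qed.

Lemma geo n : \sum_(j < n) ((b ^ j.+1)%:R : R)^-1 <= 1 - ((b ^ n)%:R)^-1.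
Proof.
elim: n => [|n IH]; first by rewrite big_ord0 expn0 invr1 subrr.
rewrite big_ord_recr /=; apply: le_trans (lerD IH (lexx _)) _.
rewrite -addrA lerD2l expnS natrM invfM.
set y := ((b ^ n)%:R : R)^-1.
have y0 : 0 <= y by rewrite /y invr_ge0 ltW ?Bpos.
have bi : (b%:R : R)^-1 <= 2^-1.
  by rewrite lef_pV2 ?posrE ?ltr0n ?ler_nat // (leq_trans _ hb).
have : y * (b%:R)^-1 <= y * 2^-1 by rewrite ler_wpM2l.
rewrite mulrC; lra.
Qed.

Lemma sum_step_le xi n : \sum_(j < n) (cst xi / (b ^ j.+1)%:R) <= cst xi.
Proof.
rewrite -mulr_sumr; rewrite -[X in _ <= X]mulr1 ler_wpM2l ?cst_ge0 //.
apply: le_trans (geo n) _; rewrite gerDl oppr_le0 invr_ge0 ltW ?Bpos //.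
Qed.

Lemma ReB (x y : R[i]) : complex.Re (x - y) = complex.Re x - complex.Re y.
Proof. by case: x; case: y. Qed.
Lemma ImB (x y : R[i]) : complex.Im (x - y) = complex.Im x - complex.Im y.
Proof. by case: x; case: y. Qed.

Lemma cvg_re xi : cvgn (muhat_re_n P xi).
Proof.
apply: (@cvg_of_bv _ _ (cst xi)) => n; apply: le_trans (sum_step_le xi n).
apply: ler_sum => j _.
have -> : muhat_re_n P xi j.+1 - muhat_re_n P xi j = complex.Re (muc P xi j.+1 - muc P xi j).
  by rewrite ReB !muc_Complex.
exact: le_trans (Re_le _) (muc_step _ _).
Qed.

Lemma cvg_im xi : cvgn (muhat_im_n P xi).
Proof.
apply: (@cvg_of_bv _ _ (cst xi)) => n; apply: le_trans (sum_step_le xi n).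
apply: ler_sum => j _.
have -> : muhat_im_n P xi j.+1 - muhat_im_n P xi j = complex.Im (muc P xi j.+1 - muc P xi j).
  by rewrite ImB !muc_Complex.
exact: le_trans (Im_le _) (muc_step _ _).
Qed.


Lemma muhat_abs_le xi M : muhat_abs P xi <= normc (muc P xi M).
Proof.
rewrite /muhat_abs /cmod.
set c := normc (muc P xi M).
have c0 : 0 <= c := normc_ge0 _.
rewrite -(ger0_norm c0) -sqrtr_sqr; apply: ler_wsqrtr.
have cre := @cvg_re xi; have cim := @cvg_im xi.

rewrite !expr2; apply: (cvgr_to_le (cvgD (cvgM cre cre) (cvgM cim cim))); near=> n.
have Mn : (M <= n)%N by near: n; exact: nbhs_infty_ge.
have := normc_muc_noninc xi Mn.
rewrite muc_Complex /= -/c => hn.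
have s0 : 0 <= muhat_re_n P xi n ^+ 2 + muhat_im_n P xi n ^+ 2 by rewrite addr_ge0 ?sqr_ge0.
change (muhat_re_n P xi n * muhat_re_n P xi n + muhat_im_n P xi n * muhat_im_n P xi n <= c * c).
rewrite -!expr2 -(sqr_sqrtr s0).
by rewrite ler_pXn2r ?nnegrE ?sqrtr_ge0.
Unshelve. all: by end_near.
Qed.

End P4.
Section P5.
Variable R : realType.
Variables (k b : nat) (P : digit k b -> R).

Lemma per_nat (f : R -> R) : periodic f (pi *+ 2) ->
  forall t (n : nat), f (t + 2 * pi * n%:R) = f t.
Proof.
move=> hf t; elim=> [|n IH]; first by rewrite mulr0 addr0.
have -> : t + 2 * pi * n.+1%:R = (t + 2 * pi * n%:R) + pi *+ 2.
  by rewrite -addn1 natrD mulr2n; ring.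
by rewrite hf IH.
Qed.

Lemma per_int (f : R -> R) : periodic f (pi *+ 2) ->
  forall t (m : int), f (t + 2 * pi * m%:~R) = f t.
Proof.
move=> hf t [n|n].
  by rewrite -pmulrn per_nat.
rewrite NegzE mulrNz mulrN.
by rewrite -[in RHS](subrK (2 * pi * (n.+1%:Z)%:~R) t) -pmulrn per_nat.
Qed.

Lemma natz_R (n : nat) : ((n%:Z)%:~R : R) = n%:R.
Proof. by rewrite -pmulrn. Qed.

Lemma gfun_per (x : 'I_k -> R) (n : 'I_k -> int) :
  gfun P (fun i => x i + (n i)%:~R) = gfun P x.
Proof.
rewrite /gfun.
have E d : 2 * pi * ddot d (fun i => x i + (n i)%:~R) =
   2 * pi * ddot d x + 2 * pi * (\sum_(i < k) ((d i : nat)%:Z * n i))%:~R.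
  rewrite /ddot -mulrDr; congr (_ * _).
  rewrite rmorph_sum -big_split /=; apply: eq_bigr => i _.
  by rewrite intrM natz_R mulrDr.
congr cmod; apply: eq_bigr => d _; rewrite E.
  by rewrite (per_int (@cosD2pi R)).
by rewrite (per_int (@sinD2pi R)).
Qed.

Lemma S_L_per L (x : 'I_k -> R) (n : 'I_k -> int) :
  S_L P L (fun i => x i + (n i)%:~R) = S_L P L x.
Proof.
rewrite /S_L; apply: eq_bigr => j _.
rewrite -[RHS](gfun_per _ (fun i => (b ^ j)%:Z * n i)); congr gfun.
by apply/funext => i; rewrite intrM natz_R mulrDr.
Qed.

Lemma pow_div (y : R) (p q : nat) : (0 < b)%N ->
  (b ^ p)%:R * (y / (b ^ (p + q))%:R) = y / (b ^ q)%:R.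
Proof.
move=> b0.
have h1 : (b ^ p)%:R != 0 :> R by rewrite pnatr_eq0 -lt0n expn_gt0 b0.
have h2 : (b ^ q)%:R != 0 :> R by rewrite pnatr_eq0 -lt0n expn_gt0 b0.
rewrite expnD natrM; field.
by rewrite h1 h2.
Qed.

Lemma block (L m : nat) (v : 'I_k -> R) : (0 < b)%N ->
  \prod_(j < L * m) gfun P (fun i => v i / (b ^ j.+1)%:R) =
  \prod_(t < m) S_L P L (fun i => v i / (b ^ (L * t.+1))%:R).
Proof.
move=> b0; elim: m => [|m IH]; first by rewrite muln0 !big_ord0.
rewrite big_ord_recr /= -IH mulnS addnC big_split_ord /=; congr (_ * _).
rewrite /S_L (reindex_inj rev_ord_inj) /=; apply: eq_bigr => r _.
congr gfun; apply/funext => i.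
rewrite -(pow_div _ r (L * m + (L - r.+1)).+1) //.
have -> : (r + (L * m + (L - r.+1)).+1 = L * m + L)%N by have := ltn_ord r; lia.
by [].
Qed.
End P5.
Section P6.
Variable R : realType.
Variables (k b : nat) (P : digit k b -> R).
Hypothesis hP : is_prob P.
Hypothesis hb : (2 <= b)%N.

Lemma sum_decomp (a c : nat) (F : ('I_k -> nat) -> R) : (0 < a)%N ->
  \sum_(y : {ffun 'I_k -> 'I_(a * c)}) F (fun t => nat_of_ord (y t)) =
  \sum_(i : {ffun 'I_k -> 'I_a}) \sum_(e : {ffun 'I_k -> 'I_c})
      F (fun t => (i t + a * e t)%N).
Proof.
move=> a0; rewrite pair_bigA /=.
have lt1 (i : 'I_a) (e : 'I_c) : (i + a * e < a * c)%N.
  have := ltn_ord i; have := ltn_ord e; nia.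
pose h (p : {ffun 'I_k -> 'I_a} * {ffun 'I_k -> 'I_c}) : {ffun 'I_k -> 'I_(a * c)} :=
  [ffun t => Ordinal (lt1 (p.1 t) (p.2 t))].
have lt2 (y : 'I_(a * c)) : (y %% a < a)%N by rewrite ltn_pmod.
have lt3 (y : 'I_(a * c)) : (y %/ a < c)%N by rewrite ltn_divLR //; have := ltn_ord y; lia.
pose g (y : {ffun 'I_k -> 'I_(a * c)}) :=
  ([ffun t => Ordinal (lt2 (y t))], [ffun t => Ordinal (lt3 (y t))]).
have hbij : bijective h.
  exists g.
    move=> [i e]; rewrite /g /h; congr pair; apply/ffunP => t; apply/val_inj;
      rewrite /= !ffunE /=.
      by rewrite addnC mulnC modnMDl modn_small.
    by rewrite addnC mulnC divnMDl // divn_small // addn0.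
  move=> y; apply/ffunP => t; apply/val_inj; rewrite /= !ffunE /=.
  by rewrite addnC mulnC -divn_eq.
rewrite (reindex h) /=; last by apply: onW_bij.
by apply: eq_bigr => p _; congr F; apply/funext => t; rewrite ffunE.
Qed.


Lemma S_L_ge0 L x : 0 <= S_L P L x.
Proof. by apply: prodr_ge0 => j _; apply: gfun_ge0. Qed.

Lemma S_L_le1 L x : S_L P L x <= 1.
Proof. by apply: prodr_ile1 => j _; rewrite gfun_ge0 gfun_le1 ?hP. Qed.

Lemma b0 : (0 < b)%N. Proof. exact: leq_trans _ hb. Qed.

Lemma card_box L : #|{ffun 'I_k -> 'I_(b ^ L)}| = (b ^ (k * L))%N.
Proof. by rewrite card_ffun !card_ord -expnM mulnC. Qed.

Lemma avg_le_sup L x :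
  ((b ^ (k * L))%:R)^-1 * \sum_(i : {ffun 'I_k -> 'I_(b ^ L)})
     S_L P L (fun m => x m + (i m : nat)%:R / (b ^ L)%:R) <= sup_avg P L.
Proof.
apply: ub_le_sup; last by exists x.
exists 1 => _ [y _ <-].
rewrite ler_pdivrMl ?Bpos // mulr1.
apply: le_trans (ler_sum _ (fun i _ => S_L_le1 L _)) _.
by rewrite sumr_const card_box.
Qed.

Lemma sup_ge L : ((b ^ (k * L))%:R)^-1 <= sup_avg P L.
Proof.
apply: le_trans (avg_le_sup L (fun _ => 0)).
rewrite ler_pMr ?invr_gt0 ?Bpos //.
have bL : (0 < b ^ L)%N by rewrite expn_gt0 b0.
pose i0 : {ffun 'I_k -> 'I_(b ^ L)} := [ffun => Ordinal bL].
rewrite (bigD1 i0) //=.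
have -> : S_L P L (fun m => 0 + (i0 m : nat)%:R / (b ^ L)%:R) = 1.
  rewrite /S_L big1 // => j _.
  have -> : (fun i => (b ^ j)%:R * (0 + (i0 i : nat)%:R / (b ^ L)%:R)) = (fun _ => 0 : R).
    by apply/funext => i; rewrite ffunE /= mul0r add0r mulr0.
  rewrite /gfun /cmod.
  have E d : ddot (R:=R) d (fun _ => 0) = 0 by rewrite /ddot big1 // => i _; rewrite mulr0.
  under eq_bigr do rewrite E mulr0 cos0 mulr1.
  under [X in _ + X ^+ 2]eq_bigr do rewrite E mulr0 sin0 mulr0.
  by rewrite hP.2 big1 // expr1n expr0n /= addr0 sqrtr1.
by rewrite lerDl sumr_ge0 // => i _; rewrite S_L_ge0.
Qed.


Lemma bt0 n : (b ^ n)%:R != 0 :> R.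
Proof. by rewrite pnatr_eq0 -lt0n expn_gt0 b0. Qed.

Lemma main_ind L m : forall x : 'I_k -> R,
  \sum_(y : {ffun 'I_k -> 'I_((b ^ L) ^ m)})
     \prod_(t < m) S_L P L (fun i => (x i + (y i : nat)%:R) / (b ^ (L * t.+1))%:R)
  <= ((b ^ (k * L))%:R * sup_avg P L) ^+ m.
Proof.
have Q0 : 0 <= (b ^ (k * L))%:R * sup_avg P L.
  by rewrite mulr_ge0 ?ler0n // (le_trans _ (sup_ge L)) // invr_ge0 ler0n.
elim: m => [|m IH] x.
  under eq_bigr do rewrite big_ord0.
  by rewrite sumr_const card_ffun !card_ord expn0 exp1n expr0.
rewrite expnS.
set Q := (b ^ (k * L))%:R * sup_avg P L.
pose F := fun v : 'I_k -> nat => \prod_(t < m.+1)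
   S_L P L (fun i => (x i + (v i)%:R) / (b ^ (L * t.+1))%:R).
change (\sum_(y : {ffun 'I_k -> 'I_(b ^ L * (b ^ L) ^ m)}) F (fun t => nat_of_ord (y t))
   <= Q ^+ m.+1).
rewrite sum_decomp ?expn_gt0 ?b0 //.
have key : forall i : {ffun 'I_k -> 'I_(b ^ L)},
  \sum_(e : {ffun 'I_k -> 'I_((b ^ L) ^ m)}) F (fun t => (i t + b ^ L * e t)%N)
   <= S_L P L (fun m0 => x m0 / (b ^ L)%:R + (i m0 : nat)%:R / (b ^ L)%:R) * Q ^+ m.
  move=> i.
  set x' := fun i0 => (x i0 + (i i0 : nat)%:R) / (b ^ L)%:R.
  have E : forall e : {ffun 'I_k -> 'I_((b ^ L) ^ m)},
    F (fun t => (i t + b ^ L * e t)%N) =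
    S_L P L (fun m0 => x m0 / (b ^ L)%:R + (i m0 : nat)%:R / (b ^ L)%:R) *
    \prod_(t < m) S_L P L (fun i0 => (x' i0 + (e i0 : nat)%:R) / (b ^ (L * t.+1))%:R).
    move=> e; rewrite /F big_ord_recl /=; congr (_ * _).
      rewrite -[RHS](S_L_per P L _ (fun t => (e t : nat)%:Z)); congr S_L; apply/funext => t.
      rewrite natz_R natrD natrM muln1.
      by field; rewrite ?bt0.
    apply: eq_bigr => t _; congr S_L; apply/funext => i0.
    rewrite /x' natrD natrM mulnS expnD natrM.
    by field; rewrite ?bt0.
  under eq_bigr do rewrite E.
  rewrite -mulr_sumr; apply: ler_wpM2l; first exact: S_L_ge0.
  exact: IH.
apply: le_trans (ler_sum _ (fun i _ => key i)) _.
rewrite -mulr_suml exprS; apply: ler_wpM2r; first exact: exprn_ge0.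
have := avg_le_sup L (fun m0 => x m0 / (b ^ L)%:R).
by rewrite mulrC ler_pdivrMr ?Bpos // mulrC.
Qed.

End P6.
Section P7.
Variable R : realType.
Variables (k b : nat) (P : digit k b -> R).
Hypothesis hP : is_prob P.
Hypothesis hb : (2 <= b)%N.

Lemma sum_inj (I J : finType) (h : I -> J) (H : J -> R) :
  injective h -> (forall j, 0 <= H j) -> \sum_(i : I) H (h i) <= \sum_(j : J) H j.
Proof.
move=> injh H0.
have -> : \sum_(i : I) H (h i) = \sum_(j in h @: [set: I]%SET) H j.
  rewrite big_imset /=; last by move=> x y _ _; exact: injh.
  by apply: eq_bigl => i; rewrite inE.
rewrite [X in _ <= X](bigID (mem (h @: [set: I]%SET))) /= lerDl.
by apply: sumr_ge0 => j _.
Qed.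

Lemma muhat_block L m xi : muhat_abs P xi <=
  \prod_(t < m) S_L P L (fun i => (xi i)%:~R / (b ^ (L * t.+1))%:R).
Proof.
apply: le_trans (muhat_abs_le hP hb xi (L * m)) _.
by rewrite normc_muc -block // b0.
Qed.


Lemma shift_prod L m N (jn : 'I_k -> nat) : (N <= (b ^ L) ^ m)%N ->
  \prod_(t < m) S_L P L (fun i => ((jn i)%:Z - N%:Z)%:~R / (b ^ (L * t.+1))%:R) =
  \prod_(t < m) S_L P L (fun i => (0 + ((jn i + ((b ^ L) ^ m - N)) %% (b ^ L) ^ m)%N%:R)
                                   / (b ^ (L * t.+1))%:R).
Proof.
move=> NB; apply: eq_bigr => t _.
set B := ((b ^ L) ^ m)%N.
pose q i := ((jn i + (B - N)) %/ B)%N.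
pose n i : int := (b ^ (L * (m - t.+1)))%:Z * ((q i)%:Z - 1).
rewrite -[RHS](S_L_per P L _ n); congr S_L; apply/funext => i.
set r := ((jn i + (B - N)) %% B)%N.
set D := (b ^ (L * t.+1))%:R : R.
set E := (b ^ (L * (m - t.+1)))%:R : R.
have hBDE : (B%:R : R) = D * E.
  rewrite /D /E -natrM -expnD /B -expnM -mulnDr subnKC //.
have hdiv : (jn i)%:R + (B%:R - N%:R) = (q i)%:R * B%:R + r%:R :> R.
  by rewrite -natrB // -natrD -natrM -natrD -divn_eq.
have D0 : D != 0 by rewrite /D bt0.
rewrite /n intrM natz_R -/E !rmorphB /= !natz_R rmorph1.
have hr : (r%:R : R) = (jn i)%:R + (B%:R - N%:R) - (q i)%:R * B%:R by lra.
by rewrite hr hBDE; field.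
Qed.


Lemma box_le L m N : (N.*2.+1 <= (b ^ L) ^ m)%N ->
  box_sum P N <= ((b ^ (k * L))%:R * sup_avg P L) ^+ m.
Proof.
move=> hN.
have NB : (N <= (b ^ L) ^ m)%N by move: hN; rewrite -addnn; lia.
have B0 : (0 < (b ^ L) ^ m)%N by move: hN; lia.
pose rho (j : {ffun 'I_k -> 'I_(N.*2.+1)}) : {ffun 'I_k -> 'I_((b ^ L) ^ m)} :=
  [ffun i => Ordinal (ltn_pmod (j i + ((b ^ L) ^ m - N)) B0)].
pose H (y : {ffun 'I_k -> 'I_((b ^ L) ^ m)}) := \prod_(t < m)
  S_L P L (fun i => ((fun _ => 0) i + (y i : nat)%:R) / (b ^ (L * t.+1))%:R).
apply: (le_trans _ (main_ind hP hb L m (fun _ => 0))).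
apply: (le_trans _ (@sum_inj _ _ rho H _ _)); last 2 first.
- move=> j1 j2 /ffunP hj; apply/ffunP => i; have := hj i; rewrite !ffunE.
  move/(congr1 val) => /= /eqP; rewrite eqn_modDr !modn_small => [/eqP hv| |].
  + by apply: val_inj.
  + exact: leq_trans (ltn_ord _) hN.
  + exact: leq_trans (ltn_ord _) hN.
- by move=> y; apply: prodr_ge0 => t _; apply: S_L_ge0.
rewrite /box_sum; apply: ler_sum => j _.
apply: le_trans (muhat_block L m _) _.
rewrite (@shift_prod L m N (fun i => nat_of_ord (j i)) NB).
rewrite le_eqVlt; apply/orP; left; apply/eqP.
by apply: eq_bigr => t _; congr S_L; apply/funext => i; rewrite /rho ffunE.
Qed.

End P7.

Lemma sup_le1 (R : realType) (k b : nat) (P : digit k b -> R) (hP : is_prob P) (hb : (2 <= b)%N) L :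
  sup_avg P L <= 1.
Proof.
apply: ge_sup; first by exists (((b ^ (k * L))%:R)^-1 * \sum_(i : {ffun 'I_k -> 'I_(b ^ L)})
     S_L P L (fun m => (fun _ => 0) m + (i m : nat)%:R / (b ^ L)%:R)), (fun _ => 0).
move=> _ [y _ <-].
rewrite ler_pdivrMl ?Bpos // mulr1.
apply: le_trans (ler_sum _ (fun i _ => S_L_le1 hP L _)) _.
by rewrite sumr_const card_box.
Qed.

Unset Implicit Arguments.
Theorem theoremA2 (R : realType) (k b : nat) (P : digit k b -> R)
  (hb : (2 <= b)%N) (hP : is_prob P) (L : nat) (hL : (0 < L)%N) :
  ((- ln (sup_avg P L) / ln ((b ^ L)%:R))%:E <= dim_l1 P)%E.
Proof.
set A := sup_avg P L.
set lam := ((b ^ L)%:R : R).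
set a := - ln A / ln lam.
have bL2 : (2 <= b ^ L)%N.
  by apply: (leq_trans hb); rewrite -{1}(expn1 b) leq_pexp2l // (leq_trans _ hb).
have lam1 : 1 < lam by rewrite /lam (ltr_nat R 1) (leq_trans _ bL2).
have lam0 : 0 < lam by apply: lt_trans lam1.
have lnl : 0 < ln lam by apply: ln_gt0.
have A1 : A <= 1 by apply: sup_le1.
have hkL : ((b ^ (k * L))%:R : R) = lam ^+ k by rewrite /lam -natrX -expnM mulnC.
have Alow : (lam ^+ k)^-1 <= A by rewrite -hkL; apply: sup_ge.
have A0 : 0 < A by apply: lt_le_trans Alow; rewrite invr_gt0 exprn_gt0.
have a0 : 0 <= a by rewrite /a divr_ge0 //; [rewrite oppr_ge0 ln_le0 | exact: ltW].
have haln : a * ln lam = - ln A by rewrite /a divfK // gt_eqF.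
have ak : a <= k%:R.
  rewrite /a ler_pdivrMr // lerNl.
  have := Alow; rewrite -ler_ln ?posrE ?invr_gt0 ?exprn_gt0 //.
  rewrite lnV ?posrE ?exprn_gt0 // lnXn // -mulNrn -mulr_natl => h; lra.
set s := k%:R - a.
have s0 : 0 <= s by rewrite /s subr_ge0.
apply: ereal_sup_ubound; exists a => //; split => //.
exists ((3 * lam) `^ s) => Q Q1.
set N := Num.truncn Q.
have Q0 : 0 <= Q by apply: le_trans Q1.
set m := (trunc_log (b ^ L) N.*2).+1.
have hm : (N.*2.+1 <= (b ^ L) ^ m)%N by apply: trunc_log_ltn.
have hm2 : ((b ^ L) ^ m <= b ^ L * N.*2.+1)%N.
  rewrite /m expnS leq_mul2l; apply/orP; right.
  case: (posnP N.*2) => [->|hN]; first by rewrite trunc_log0.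
  by apply: leq_trans (trunc_logP _ hN) _.
apply: le_trans (box_le hP hb hm) _.
rewrite hkL.
have E1 : (lam ^+ k * A) ^+ m = (lam ^+ m) `^ s.
  rewrite /powR expf_eq0 gt_eqF //= lnXn // -mulr_natl.
  have eA : A = expR (ln A) by rewrite lnK // posrE.
  have el : lam = expR (ln lam) by rewrite lnK // posrE.
  rewrite [in LHS]el [in LHS]eA -expRM_natl -expRD -expRM_natl; congr expR.
  rewrite /s -[ln A]opprK -haln; ring.
rewrite E1.
have hlm : lam ^+ m <= 3 * lam * Q.
  have : ((b ^ L) ^ m)%:R <= (b ^ L * N.*2.+1)%:R :> R by rewrite ler_nat.
  rewrite natrX natrM -/lam => h; apply: le_trans h _.
  rewrite -mulrA [3 * _]mulrC -mulrA ler_pM2l //.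
  have hN : (N%:R : R) <= Q by rewrite truncn_le.
  rewrite -addnn -addn1 !natrD; lra.
apply: le_trans (ge0_ler_powR s0 _ _ hlm) _.
- by rewrite nnegrE exprn_ge0 // ltW.
- by rewrite nnegrE !mulr_ge0 // ltW.
by rewrite powRM // mulr_ge0 // ltW.
Qed.
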